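(* For the $N$-relay 1-2-1 diamond network with relays operating in HD, the linear program $\mathrm{P1^d}$ with $\mathsf C_p=\frac{\ell_{p,0}\ell_{N+1,p}}{\ell_{p,0}+\ell_{N+1,p}}$ has an optimal solution $(x_1,\dots,x_N)$ with at most $3$ indices $p$ such that $x_p>0$. Hence the HD approximate capacity $\mathsf{C}_{\rm cs,iid}$ is achieved by activating at most three relays, independently of $N$.
   Context: Diamond network: nodes $[0:N+1]$, source $0$, destination $N+1$, relays $[1:N]$; the only links are $(0,p)$ and $(p,N+1)$ for $p\in[1:N]$, with positive capacities $\ell_{p,0}$ and $\ell_{N+1,p}$. $\mathrm{P1^d}$ is the linear program $\max\sum_{p=1}^N x_p\mathsf C_p$ subject to $0\le x_p\le1$ for all $p\in[1:N]$, $\sum_{p=1}^N x_p\mathsf C_p/\ell_{p,0}\le1$, and $\sum_{p=1}^N x_p\mathsf C_p/\ell_{N+1,p}\le1$. In the HD case (with the HD $\mathsf C_p$ above) its optimal value equals $\mathsf{C}_{\rm cs,iid}$, the HD approximate capacity $\max_\lambda\min_\Omega\sum_{i\in\Omega,j\in\Omega^c}(\sum_{s:\,(i,j)\text{ active in }s}\lambda_s)\ell_{j,i}$ over probability vectors on HD beam states and cuts $0\in\Omega\subseteq[0:N]$. *)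

(* Defs.v *)
From HB Require Import structures.
From mathcomp Require Import all_boot all_order all_algebra.
Set Implicit Arguments. Unset Strict Implicit. Unset Printing Implicit Defensive.
Import Order.TTheory GRing.Theory Num.Theory.
Local Open Scope ring_scope.

(* Diamond network with N relays indexed by p : 'I_N (relay p of the paper is
   relay index p+1).  l0 p = \ell_{p,0} (source -> relay p),
   l1 p = \ell_{N+1,p} (relay p -> destination). *)

Definition Chd (R : realFieldType) (N : nat) (l0 l1 : 'I_N -> R) (p : 'I_N) : R :=
  l0 p * l1 p / (l0 p + l1 p).

Definition P1d_feasible (R : realFieldType) (N : nat) (l0 l1 C : 'I_N -> R)
  (x : 'I_N -> R) : Prop :=
  (forall p, 0 <= x p <= 1) /\
  \sum_(p < N) x p * C p / l0 p <= 1 /\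
  \sum_(p < N) x p * C p / l1 p <= 1.

Definition P1d_obj (R : realFieldType) (N : nat) (C : 'I_N -> R) (x : 'I_N -> R) : R :=
  \sum_(p < N) x p * C p.

Definition P1d_optimal (R : realFieldType) (N : nat) (l0 l1 C : 'I_N -> R)
  (x : 'I_N -> R) : Prop :=
  P1d_feasible l0 l1 C x /\
  forall y, P1d_feasible l0 l1 C y -> P1d_obj C y <= P1d_obj C x.

(* Main.v *)
Require Import Defs.
From HB Require Import structures.
From mathcomp Require Import all_boot all_order all_algebra.
From mathcomp Require Import ring lra zify.
From Stdlib Require Import Classical.
Import Order.TTheory GRing.Theory Num.Theory.
Local Open Scope ring_scope.

Set Implicit Arguments. Unset Strict Implicit. Unset Printing Implicit Defensive.

Definition gfeas (R : realFieldType) N (w1 w2 x : 'I_N -> R) : Prop :=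
  (forall p, 0 <= x p <= 1) /\ \sum_(p < N) x p * w1 p <= 1 /\ \sum_(p < N) x p * w2 p <= 1.
Definition gobj (R : realFieldType) N (c x : 'I_N -> R) := \sum_(p < N) x p * c p.
Definition fracs (R : realFieldType) N (x : 'I_N -> R) : {set 'I_N} :=
  [set p | (0 < x p) && (x p < 1)].
Definition ones (R : realFieldType) N (x : 'I_N -> R) : {set 'I_N} := [set p | x p == 1].
Definition tight (R : realFieldType) N (w x : 'I_N -> R) : bool :=
  \sum_(p < N) x p * w p == 1.
Definition vertex (R : realFieldType) N (w1 w2 x : 'I_N -> R) : Prop :=
  forall d : 'I_N -> R, (forall p, p \notin fracs x -> d p = 0) ->
   (tight w1 x -> \sum_(p < N) d p * w1 p = 0) ->
   (tight w2 x -> \sum_(p < N) d p * w2 p = 0) -> forall p, d p = 0.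
Definition vsig (R : realFieldType) N (w1 w2 x : 'I_N -> R) :=
  (ones x, fracs x, tight w1 x, tight w2 x).

Lemma box01 (R : realFieldType) (a : R) : 0 <= a <= 1 -> ~~ ((0 < a) && (a < 1)) -> a = 0 \/ a = 1.
Proof.
move=> /andP[h0 h1]; rewrite negb_and -!leNgt => /orP[h|h]; [left|right]; apply/eqP;
  by rewrite eq_le ?h ?h0 ?h1.
Qed.

Lemma sum_shift (R : realFieldType) N (y d w : 'I_N -> R) e :
  \sum_(p < N) (y p + e * d p) * w p = \sum_(p < N) y p * w p + e * \sum_(p < N) d p * w p.
Proof. rewrite mulr_sumr -big_split /=; apply: eq_bigr => p _; ring. Qed.

Lemma sum_sub (R : realFieldType) N (y d w : 'I_N -> R) :
  \sum_(p < N) (y p - d p) * w p = \sum_(p < N) y p * w p - \sum_(p < N) d p * w p.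
Proof. rewrite -sumrB; apply: eq_bigr => p _; ring. Qed.

Lemma gobj_ext (R : realFieldType) N (c x y : 'I_N -> R) :
  (forall p, x p = y p) -> gobj c x = gobj c y.
Proof. by move=> e; apply: eq_bigr => p _; rewrite e. Qed.

Lemma vertex_uniq (R : realFieldType) N (w1 w2 x x' : 'I_N -> R) :
  gfeas w1 w2 x -> gfeas w1 w2 x' -> vertex w1 w2 x ->
  vsig w1 w2 x = vsig w1 w2 x' -> forall p, x p = x' p.
Proof.
move=> [bx _] [bx' _] vx [eO eF eT1 eT2] p.
apply/eqP; rewrite -subr_eq0; apply/eqP; apply: (vx (fun p => x p - x' p)).
- move=> q hq; have hq' : q \notin fracs x' by rewrite -eF.
  move: hq hq'; rewrite !inE => hq hq'.
  have [e1|e1] := box01 (bx q) hq; have [e2|e2] := box01 (bx' q) hq'.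
  + by rewrite e1 e2 subrr.
  + have : q \in ones x' by rewrite inE e2.
    by rewrite -eO inE e1 eq_sym oner_eq0.
  + have : q \in ones x by rewrite inE e1.
    by rewrite eO inE e2 eq_sym oner_eq0.
  + by rewrite e1 e2 subrr.
- move=> t; have t' : tight w1 x' by rewrite -eT1.
  by rewrite sum_sub (eqP t) (eqP t') subrr.
- move=> t; have t' : tight w2 x' by rewrite -eT2.
  by rewrite sum_sub (eqP t) (eqP t') subrr.
Qed.

Lemma max_vertex (R : realFieldType) N (w1 w2 c : 'I_N -> R)
  (s : seq ({set 'I_N} * {set 'I_N} * bool * bool)) :
  (exists x, gfeas w1 w2 x /\ vertex w1 w2 x /\ vsig w1 w2 x \in s) ->
  exists v, gfeas w1 w2 v /\ vertex w1 w2 v /\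
    forall x, gfeas w1 w2 x -> vertex w1 w2 x -> vsig w1 w2 x \in s -> gobj c x <= gobj c v.
Proof.
elim: s => [|h s IH]; first by case=> x [_ [_]]; rewrite in_nil.
move=> hex.
have uh : forall x y, gfeas w1 w2 x -> vertex w1 w2 x -> vsig w1 w2 x = h ->
   gfeas w1 w2 y -> vsig w1 w2 y = h -> gobj c y = gobj c x.
  move=> x y fx vx hx fy hy; apply: gobj_ext => p; apply/esym.
  by apply: (vertex_uniq fx fy vx); rewrite hx hy.
have [[x [fx [vx hx]]]|nh] :=
  classic (exists x, gfeas w1 w2 x /\ vertex w1 w2 x /\ vsig w1 w2 x = h).
- have [[y [fy [vy hy]]]|ns] :=
    classic (exists x, gfeas w1 w2 x /\ vertex w1 w2 x /\ vsig w1 w2 x \in s).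
  + have [v [fv [vv mv]]] := IH (ex_intro _ y (conj fy (conj vy hy))).
    case: (lerP (gobj c x) (gobj c v)) => cmp.
    * exists v; split=> //; split=> // z fz vz; rewrite in_cons => /orP[/eqP hz|hz].
      - by rewrite (uh x z).
      - exact: mv.
    * exists x; split=> //; split=> // z fz vz; rewrite in_cons => /orP[/eqP hz|hz].
      - by rewrite (uh x z).
      - exact: le_trans (mv z fz vz hz) (ltW cmp).
  + exists x; split=> //; split=> // z fz vz; rewrite in_cons => /orP[/eqP hz|hz].
    * by rewrite (uh x z).
    * by case: ns; exists z.
- have [[y [fy [vy hy]]]|ns] :=
    classic (exists x, gfeas w1 w2 x /\ vertex w1 w2 x /\ vsig w1 w2 x \in s).
  + have [v [fv [vv mv]]] := IH (ex_intro _ y (conj fy (conj vy hy))).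
    exists v; split=> //; split=> // z fz vz; rewrite in_cons => /orP[/eqP hz|hz].
    * by case: nh; exists z.
    * exact: mv.
  + exfalso; case: hex => z [fz [vz]]; rewrite in_cons => /orP[/eqP hz|hz].
    * by case: nh; exists z.
    * by case: ns; exists z.
Qed.

Lemma step_exists (R : realFieldType) (K : finType) (s t : K -> R) (k0 : K) :
  (forall k, 0 <= s k) -> t k0 < 0 -> (forall k, t k < 0 -> 0 < s k) ->
  exists e, 0 < e /\ (forall k, 0 <= s k + e * t k) /\
    exists k1, t k1 < 0 /\ s k1 + e * t k1 = 0.
Proof.
move=> s0 tk0 pos.
case: (@arg_minP _ R K k0 (fun k => t k < 0) (fun k => s k / - t k) tk0) => k1 Pk1 mn.
have nt1 : 0 < - t k1 by rewrite oppr_gt0.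
exists (s k1 / - t k1); split; first by rewrite divr_gt0 // pos.
split; last first.
  exists k1; split => //; have tne : t k1 != 0 by rewrite lt_eqF.
  by field.
move=> k; have [tk|tk] := ltP (t k) 0.
- have nt : 0 < - t k by rewrite oppr_gt0.
  have := ler_wpM2r (ltW nt) (mn k tk).
  rewrite divfK ?lt0r_neq0 // mulrN; lra.
- apply: addr_ge0 => //; apply: mulr_ge0 => //; apply: ltW; rewrite divr_gt0 // pos //.
Qed.

Lemma meas_lt (a b : nat) (T1 T1' T2 T2' : bool) : (a <= b)%N -> (T1 -> T1') -> (T2 -> T2') ->
  ((a < b)%N \/ (~~T1 && T1') \/ (~~T2 && T2')) -> (a + ~~T1' + ~~T2' < b + ~~T1 + ~~T2)%N.
Proof.
case: T1; case: T1'; case: T2; case: T2' => /= h1 h2 h3 [h|[h|h]] //; try lia;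
  try (by exfalso; apply: notF; apply: h2); try (by exfalso; apply: notF; apply: h3).
Qed.

Definition meas (R : realFieldType) N (w1 w2 x : 'I_N -> R) : nat :=
  (#|fracs x| + ~~ tight w1 x + ~~ tight w2 x)%N.

Lemma improve (R : realFieldType) N (w1 w2 c y : 'I_N -> R) :
  gfeas w1 w2 y -> ~ vertex w1 w2 y ->
  exists y', gfeas w1 w2 y' /\ gobj c y <= gobj c y' /\ (meas w1 w2 y' < meas w1 w2 y)%N.
Proof.
move=> [by1 [c1 c2]] nv.
have [d [sd [t1 [t2 [p0 dp0]]]]] : exists d : 'I_N -> R,
   (forall p, p \notin fracs y -> d p = 0) /\
   (tight w1 y -> \sum_(p < N) d p * w1 p = 0) /\
   (tight w2 y -> \sum_(p < N) d p * w2 p = 0) /\ exists p, d p != 0.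
  apply: NNPP => H; apply: nv => d sd t1 t2 p; apply: NNPP => hp; apply: H.
  by exists d; do 3 split => //; exists p; apply/eqP.
have [{}d [{}sd [{}t1 [{}t2 [{}dp0 go]]]]] : exists d' : 'I_N -> R,
   (forall p, p \notin fracs y -> d' p = 0) /\
   (tight w1 y -> \sum_(p < N) d' p * w1 p = 0) /\
   (tight w2 y -> \sum_(p < N) d' p * w2 p = 0) /\ d' p0 != 0 /\ 0 <= gobj c d'.
  have [g0|g0] := lerP 0 (gobj c d); first by exists d.
  exists (fun p => - d p); split; first by move=> p /sd ->; rewrite oppr0.
  have sN : forall w : 'I_N -> R, \sum_(p < N) - d p * w p = - \sum_(p < N) d p * w p.
    by move=> w; rewrite -sumrN; apply: eq_bigr => p _; rewrite mulNr.
  split; first by move=> /t1 h; rewrite sN h oppr0.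
  split; first by move=> /t2 h; rewrite sN h oppr0.
  split; first by rewrite oppr_eq0.
  rewrite /gobj sN -/(gobj c d); lra.
pose s (k : ('I_N * bool + bool)%type) : R := match k with
  | inl (p, false) => y p | inl (p, true) => 1 - y p
  | inr false => 1 - \sum_(p < N) y p * w1 p | inr true => 1 - \sum_(p < N) y p * w2 p end.
pose t (k : ('I_N * bool + bool)%type) : R := match k with
  | inl (p, false) => d p | inl (p, true) => - d p
  | inr false => - \sum_(p < N) d p * w1 p | inr true => - \sum_(p < N) d p * w2 p end.
have dF : forall p, d p != 0 -> p \in fracs y.
  by move=> p; apply: contraR => /sd ->; rewrite eqxx.
have s0 : forall k, 0 <= s k.
  case=> [[p []]|[]] /=; try (have := by1 p); rewrite ?subr_ge0 //; by case/andP.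
have [k0 tk0] : exists k0, t k0 < 0.
  have [dp|dp] := ltP 0 (d p0).
  - by exists (inl (p0, true)); rewrite /= oppr_lt0.
  - by exists (inl (p0, false)); rewrite /= lt_neqAle dp0 dp.
have pos : forall k, t k < 0 -> 0 < s k.
  case=> [[p []]|[]] /= h.
  - have /dF : d p != 0 by rewrite -oppr_eq0 lt_eqF.
    by rewrite inE subr_gt0 => /andP[].
  - have /dF : d p != 0 by rewrite lt_eqF.
    by rewrite inE => /andP[].
  - rewrite subr_gt0 lt_neqAle c2 andbT; apply/negP => /eqP e.
    have : tight w2 y by rewrite /tight e.
    by move=> /t2 e'; rewrite e' oppr0 ltxx in h.
  - rewrite subr_gt0 lt_neqAle c1 andbT; apply/negP => /eqP e.
    have : tight w1 y by rewrite /tight e.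
    by move=> /t1 e'; rewrite e' oppr0 ltxx in h.
have [e [e0 [sl [k1 [tk1 sk1]]]]] := step_exists s0 tk0 pos.
pose y' p := y p + e * d p.
have sh : forall w, \sum_(p < N) y' p * w p = \sum_(p < N) y p * w p + e * \sum_(p < N) d p * w p.
  by move=> w; rewrite /y' sum_shift.
exists y'; split.
  split.
    move=> p; have := sl (inl (p, false)); have := sl (inl (p, true)) => /=.
    rewrite /y'; move=> h1 h2; apply/andP; split; lra.
  split.
    have := sl (inr false) => /=; rewrite sh; lra.
  have := sl (inr true) => /=; rewrite sh; lra.
split.
  rewrite /gobj /y' sum_shift -/(gobj c y) -/(gobj c d).
  have := mulr_ge0 (ltW e0) go; lra.
have Fsub : fracs y' \subset fracs y.
  apply/subsetP => p; apply: contraTT => hp; have h := sd _ hp.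
  by rewrite inE /y' h mulr0 addr0; rewrite inE in hp.
have T1m : tight w1 y -> tight w1 y'.
  by move=> h; have := t1 h; rewrite /tight sh => ->; rewrite mulr0 addr0.
have T2m : tight w2 y -> tight w2 y'.
  by move=> h; have := t2 h; rewrite /tight sh => ->; rewrite mulr0 addr0.
have cardF : (#|fracs y'| <= #|fracs y|)%N := subset_leq_card Fsub.
have fin : forall p, p \in fracs y -> p \notin fracs y' -> (#|fracs y'| < #|fracs y|)%N.
  by move=> p h1 h2; apply: proper_card; apply/properP; split => //; exists p.
rewrite /meas; move: T1m T2m.
case: k1 tk1 sk1 => [[p []]|[]] /= tk sk.
- have pF : p \in fracs y by apply: dF; rewrite -oppr_eq0 lt_eqF.
  have pF' : p \notin fracs y'.
    rewrite inE /y'; have -> : y p + e * d p = 1 by rewrite mulrN in sk; lra.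
    by rewrite ltxx andbF.
  by move=> h1 h2; apply: meas_lt => //; left; exact: fin _ pF pF'.
- have pF : p \in fracs y by apply: dF; rewrite lt_eqF.
  have pF' : p \notin fracs y'.
    rewrite inE /y'; have -> : y p + e * d p = 0 by lra.
    by rewrite ltxx.
  by move=> h1 h2; apply: meas_lt => //; left; exact: fin _ pF pF'.
- have nT : ~~ tight w2 y.
    by apply/negP => /t2 h; rewrite h oppr0 ltxx in tk.
  have T : tight w2 y'.
    by rewrite /tight sh; apply/eqP; rewrite mulrN in sk; lra.
  by move=> h1 h2; apply: meas_lt => //; right; right; rewrite nT T.
- have nT : ~~ tight w1 y.
    by apply/negP => /t1 h; rewrite h oppr0 ltxx in tk.
  have T : tight w1 y'.
    by rewrite /tight sh; apply/eqP; rewrite mulrN in sk; lra.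
  by move=> h1 h2; apply: meas_lt => //; right; left; rewrite nT T.
Qed.

Lemma dominance (R : realFieldType) N (w1 w2 c : 'I_N -> R) n : forall y,
  gfeas w1 w2 y -> (meas w1 w2 y <= n)%N ->
  exists v, gfeas w1 w2 v /\ vertex w1 w2 v /\ gobj c y <= gobj c v.
Proof.
elim: n => [|n IH] y fy hm; have [vy|nv] := classic (vertex w1 w2 y);
  try by exists y; split => //; split.
- have [y' [_ [_ lt]]] := improve c fy nv; lia.
- have [y' [fy' [le lt]]] := improve c fy nv.
  have [v [fv [vv lv]]] := IH y' fy' (ltac:(lia)).
  by exists v; split => //; split => //; apply: le_trans lv.
Qed.

Lemma exists_opt (R : realFieldType) N (w1 w2 c : 'I_N -> R) :
  exists v, gfeas w1 w2 v /\ vertex w1 w2 v /\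
    forall y, gfeas w1 w2 y -> gobj c y <= gobj c v.
Proof.
have f0 : gfeas w1 w2 (fun _ => 0).
  split; first by move=> p; rewrite lexx ler01.
  by split; rewrite big1 ?ler01 // => p _; rewrite mul0r.
have [z [fz [vz _]]] := @dominance R N w1 w2 c _ _ f0 (leqnn _).
pose S := enum (@predT ({set 'I_N} * {set 'I_N} * bool * bool)%type).
have inS : forall x, x \in S by move=> x; rewrite mem_enum.
have [v [fv [vv mv]]] := @max_vertex R N w1 w2 c S
  (ex_intro _ z (conj fz (conj vz (inS _)))).
exists v; split => //; split => // y fy.
have [u [fu [vu lu]]] := @dominance R N w1 w2 c _ _ fy (leqnn _).
exact: le_trans lu (mv u fu vu (inS _)).
Qed.

Lemma sum_delta (R : realFieldType) N (f : 'I_N -> R) i :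
  \sum_(p < N) (p == i)%:R * f p = f i.
Proof.
rewrite (bigD1 i) //= eqxx mul1r big1 ?addr0 // => q /negbTE ->; by rewrite mul0r.
Qed.

Lemma sum3 (R : realFieldType) N (f : 'I_N -> R) i j k a b c :
  \sum_(p < N) (a * (p == i)%:R + b * (p == j)%:R + c * (p == k)%:R) * f p =
  a * f i + b * f j + c * f k.
Proof.
under eq_bigr do rewrite !mulrDl -!mulrA.
by rewrite !big_split /= -!mulr_sumr !sum_delta.
Qed.

Lemma fracs_le2 (R : realFieldType) N (w1 w2 x : 'I_N -> R) :
  (forall p, w1 p + w2 p = 1) -> vertex w1 w2 x -> (#|fracs x| <= 2)%N.
Proof.
move=> ws vx; rewrite leqNgt; apply/negP => h3.
have /card_gt0P [i iF] : (0 < #|fracs x|)%N by lia.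
have h2 : (1 < #|fracs x :\ i|)%N by move: h3; rewrite (cardsD1 i) iF; lia.
have /card_gt0P [j jF] : (0 < #|fracs x :\ i|)%N by lia.
have h1 : (0 < #|fracs x :\ i :\ j|)%N by move: h2; rewrite (cardsD1 j _) jF; lia.
have /card_gt0P [k kF] := h1.
move: jF kF; rewrite !in_setD1 => /andP[ji jF] /andP[kj /andP[ki kF]].
have key : forall a b c : R,
    a + b + c = 0 -> a * w1 i + b * w1 j + c * w1 k = 0 ->
    forall p, a * (p == i)%:R + b * (p == j)%:R + c * (p == k)%:R = 0.
  move=> a b c e1 e2; apply: vx.
  - move=> p hp.
    have [epi|pi] := eqVneq p i; first by rewrite epi iF in hp.
    have [epj|pj] := eqVneq p j; first by rewrite epj jF in hp.
    have [epk|pk] := eqVneq p k; first by rewrite epk kF in hp.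
    by rewrite !mulr0 !addr0.
  - by move=> _; rewrite sum3.
  - move=> _; rewrite sum3.
    have -> : w2 i = 1 - w1 i by rewrite -(ws i); ring.
    have -> : w2 j = 1 - w1 j by rewrite -(ws j); ring.
    have -> : w2 k = 1 - w1 k by rewrite -(ws k); ring.
    have : a + b + c - (a * w1 i + b * w1 j + c * w1 k) = 0 by rewrite e1 e2 subrr.
    by move=> <-; ring.
have [eij|nij] := eqVneq (w1 i) (w1 j).
- have := key 1 (-1) 0 ltac:(ring) ltac:(rewrite eij; ring) i.
  have nik : i != k by rewrite eq_sym.
  have nij' : i != j by rewrite eq_sym.
  rewrite eqxx (negbTE nij') (negbTE nik).
  move=> /= h; have : (1:R) = 0 by rewrite -h; ring.
  by move/eqP; rewrite oner_eq0.
- have := key (w1 j - w1 k) (w1 k - w1 i) (w1 i - w1 j) ltac:(ring) ltac:(ring) k.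
  rewrite eqxx (negbTE ki) (negbTE kj) !mulr0 mulr1 !add0r => /eqP.
  by rewrite subr_eq0 (negbTE nij).
Qed.

Lemma support_le3 (R : realFieldType) N (w1 w2 x : 'I_N -> R) :
  (forall p, w1 p + w2 p = 1) -> gfeas w1 w2 x -> vertex w1 w2 x ->
  (#|[set p : 'I_N | (0 < x p)%R]| <= 3)%N.
Proof.
move=> ws [bx [c1 c2]] vx.
have hF := fracs_le2 ws vx.
have s2 : \sum_(p < N) x p <= 2.
  have -> : \sum_(p < N) x p = \sum_(p < N) x p * w1 p + \sum_(p < N) x p * w2 p.
    rewrite -big_split /=; apply: eq_bigr => p _; have h := ws p.
    by rewrite -[LHS]mulr1 -h mulrDr.
  lra.
pose g (p : 'I_N) : R := (if p \in ones x then 1 else 0) + (if p \in fracs x then x p else 0).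
have gle : \sum_(p < N) g p <= \sum_(p < N) x p.
  apply: ler_sum => p _; rewrite /g /ones /fracs !inE.
  have [e1|n1] := eqVneq (x p) 1.
    by rewrite e1 ltxx andbF addr0.
  rewrite add0r; case: ifP => _ //; by case/andP: (bx p).
have gE : \sum_(p < N) g p = (#|ones x|)%:R + \sum_(p in fracs x) x p.
  by rewrite big_split /= -!big_mkcond /= sumr_const.
have sF0 : 0 <= \sum_(p in fracs x) x p.
  by apply: sumr_ge0 => p; rewrite inE => /andP[/ltW].
have hO : (#|ones x| <= 2)%N.
  by rewrite -(ler_nat R); have : (2:R) = 2%:R by []; lra.
have sub : [set p | 0 < x p] \subset ones x :|: fracs x.
  apply/subsetP => p; rewrite !inE => hp.
  have [e|e] := eqVneq (x p) 1; first by [].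
  rewrite hp /=; have := bx p; case/andP => _ h; by rewrite lt_neqAle e h.
have cU := subset_leq_card sub.
have cU2 : (#|ones x :|: fracs x| <= #|ones x| + #|fracs x|)%N by rewrite cardsU; lia.
have [o2|o2] := eqVneq #|ones x| 2%N; last first.
  have h1 : (#|ones x| <= 1)%N by move: hO o2; move: #|ones x| => a; lia.
  exact: leq_trans cU (leq_trans cU2 (leq_add h1 hF)).
have [/eqP F0|/set0Pn [p0 p0F]] := boolP (fracs x == set0).
  rewrite F0 in cU cU2; rewrite cards0 addn0 o2 in cU2; exact: leq_trans cU (leq_trans cU2 _).
exfalso.
have : x p0 <= \sum_(p in fracs x) x p.
  rewrite (bigD1 p0) //= -{1}(addr0 (x p0)) lerD2l.
  by apply: sumr_ge0 => p /andP[]; rewrite inE => /andP[/ltW].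
move: p0F; rewrite inE => /andP[xp0 _].
rewrite o2 in gE; have : (2:R) = 2%:R by []. lra.
Qed.


Lemma wsum_lem (R : realFieldType) (a b : R) : 0 < a -> 0 < b -> a * b / (a + b) / a + a * b / (a + b) / b = 1.
Proof.
move=> h0 h1.
have n0 : a != 0 by rewrite gt_eqF.
have n1 : b != 0 by rewrite gt_eqF.
have n2 : a + b != 0 by rewrite gt_eqF // addr_gt0.
by field; rewrite n0 n1 n2.
Qed.

Unset Implicit Arguments.

Theorem lemma5 (R : realFieldType) (N : nat) (l0 l1 : 'I_N -> R)
  (hl0 : forall p, 0 < l0 p) (hl1 : forall p, 0 < l1 p) :
  exists x : 'I_N -> R,
    P1d_optimal l0 l1 (Chd l0 l1) x /\
    (#|[set p : 'I_N | (0 < x p)%R]| <= 3)%N.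
Proof.
pose C := Chd l0 l1.
pose w1 p := C p / l0 p.
pose w2 p := C p / l1 p.
have ws : forall p, w1 p + w2 p = 1.
  by move=> p; rewrite /w1 /w2 /C /Chd; apply: wsum_lem.
have feq : forall x, P1d_feasible l0 l1 C x <-> gfeas w1 w2 x.
  move=> x; rewrite /P1d_feasible /gfeas.
  have -> : \sum_(p < N) x p * C p / l0 p = \sum_(p < N) x p * w1 p.
    by apply: eq_bigr => p _; rewrite /w1 mulrA.
  have -> : \sum_(p < N) x p * C p / l1 p = \sum_(p < N) x p * w2 p.
    by apply: eq_bigr => p _; rewrite /w2 mulrA.
  by [].
have [v [fv [vv mv]]] := exists_opt w1 w2 C.
exists v; split; last exact: support_le3 ws fv vv.
split; first by apply/feq.
by move=> y /feq fy; apply: mv.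
Qed.
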